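(* Consider a Markov decision process with finite state set $S$, finite action set $A$, transition kernel $T(s'\mid s,a)$, initial state distribution $p_0$ and discount factor $\gamma\in[0,1)$. Let $\beta>0$, $\alpha\in[0,1)$, let $\mu^U(a\mid s)$ be a policy with $\mu^U(a\mid s)>0$ for all $(s,a)$, let $d^U$ be a probability distribution on $S\times A$, let $\Psi:S\times A\to\mathbb{R}$, and set $\delta(s,a)=\exp\big(\frac{\Psi(s,a)}{1-\alpha}\big)$. For $Q:S\times A\to\mathbb{R}$ and a policy $\pi$ define $$V_Q^\pi(s)=\mathbb{E}_{a\sim\pi(\cdot\mid s)}\Big[Q(s,a)-\beta\log\frac{\pi(a\mid s)}{\mu^U(a\mid s)}\Big],\qquad \mathcal{T}^\pi[Q](s,a)=Q(s,a)-\gamma\,\mathbb{E}_{s'\sim T(\cdot\mid s,a)}\big[V_Q^\pi(s')\big],$$ $$\widetilde{L}(Q,\pi)=(1-\gamma)\,\mathbb{E}_{s\sim p_0}\big[V_Q^\pi(s)\big]-\mathbb{E}_{(s,a)\sim d^U}\big[\delta(s,a)\,\mathcal{T}^\pi[Q](s,a)\big]+(1-\alpha)\,\mathbb{E}_{(s,a)\sim d^U}\big[\delta(s,a)\big].$$ Also define $V_Q(s)=\beta\log\big(\sum_{a}\mu^U(a\mid s)\exp(Q(s,a)/\beta)\big)$, $\mathcal{T}[Q](s,a)=Q(s,a)-\gamma\,\mathbb{E}_{s'\sim T(\cdot\mid s,a)}[V_Q(s')]$, and $$\widetilde{L}(Q)=(1-\gamma)\,\mathbb{E}_{s\sim p_0}\big[V_Q(s)\big]-\mathbb{E}_{(s,a)\sim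 d^U}\big[\delta(s,a)\,\mathcal{T}[Q](s,a)\big].$$ Then: (i) $\widetilde{L}(Q,\pi)$ is linear in $Q$ and concave in $\pi$, and consequently $\max_\pi\min_Q\widetilde{L}(Q,\pi)=\min_Q\max_\pi\widetilde{L}(Q,\pi)$. (ii) The min–max problem $\min_Q\max_\pi\widetilde{L}(Q,\pi)$ reduces to the non-adversarial problem $\min_Q\widetilde{L}(Q)$ (for every $Q$, $\max_\pi\widetilde{L}(Q,\pi)$ equals $\widetilde{L}(Q)$ plus the $Q$-independent constant $(1-\alpha)\mathbb{E}_{(s,a)\sim d^U}[\delta(s,a)]$), and $\widetilde{L}(Q)$ is convex in $Q$.
   Context: Policies $\pi$ range over all conditional distributions $\pi(\cdot\mid s)$ on $A$, $s\in S$. In the paper $\mu^U$ is the behavior policy of the union dataset, $d^U$ its state-action distribution, and $\Psi(s,a)=\log\frac{d^G(s,a)}{d^U(s,a)}-\alpha\log\frac{d^B(s,a)}{d^U(s,a)}$. *)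

(* Defs.v *)
From HB Require Import structures.
From mathcomp Require Import all_boot all_order all_algebra.
From mathcomp Require Import all_classical all_reals.
From mathcomp Require Import ereal sequences exp.
Set Implicit Arguments. Unset Strict Implicit. Unset Printing Implicit Defensive.
Import Order.TTheory GRing.Theory Num.Theory.
Local Open Scope ring_scope.

Section MDP.
Context {R : realType} {S A : finType}.

Definition is_dist {X : finType} (p : X -> R) : Prop :=
  (forall x, 0 <= p x) /\ \sum_(x : X) p x = 1.

Definition is_policy (pi : S -> A -> R) : Prop :=
  forall s, is_dist (pi s).

(* transition kernel T(s' | s, a), written T s a s' *)
Definition is_kernel (T : S -> A -> S -> R) : Prop :=
  forall s a, is_dist (T s a).

Variables (gamma beta alpha : R) (T : S -> A -> S -> R) (p0 : S -> R)
  (mu : S -> A -> R) (dU : S * A -> R) (Psi : S * A -> R).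

Definition delta (sa : S * A) : R := expR (Psi sa / (1 - alpha)).

(* V_Q^pi(s) = E_{a~pi(.|s)}[Q(s,a) - beta log(pi(a|s)/mu(a|s))]
   (terms with pi(a|s) = 0 contribute 0, i.e. the convention 0 log 0 = 0) *)
Definition VQpi (Q : S -> A -> R) (pi : S -> A -> R) (s : S) : R :=
  \sum_(a : A) pi s a * (Q s a - beta * ln (pi s a / mu s a)).

Definition TQpi (Q : S -> A -> R) (pi : S -> A -> R) (s : S) (a : A) : R :=
  Q s a - gamma * \sum_(s' : S) T s a s' * VQpi Q pi s'.

Definition Lpi (Q : S -> A -> R) (pi : S -> A -> R) : R :=
  (1 - gamma) * \sum_(s : S) p0 s * VQpi Q pi s
  - \sum_(sa : S * A) dU sa * (delta sa * TQpi Q pi sa.1 sa.2)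
  + (1 - alpha) * \sum_(sa : S * A) dU sa * delta sa.

Definition VQ (Q : S -> A -> R) (s : S) : R :=
  beta * ln (\sum_(a : A) mu s a * expR (Q s a / beta)).

Definition TQ (Q : S -> A -> R) (s : S) (a : A) : R :=
  Q s a - gamma * \sum_(s' : S) T s a s' * VQ Q s'.

Definition L (Q : S -> A -> R) : R :=
  (1 - gamma) * \sum_(s : S) p0 s * VQ Q s
  - \sum_(sa : S * A) dU sa * (delta sa * TQ Q sa.1 sa.2).

End MDP.

(* Main.v *)
Require Import Defs.
From HB Require Import structures.
From mathcomp Require Import all_boot all_order all_algebra.
From mathcomp Require Import all_classical all_reals.
From mathcomp Require Import ereal sequences exp.
Import Order.TTheory GRing.Theory Num.Theory.
Local Open Scope classical_set_scope.
Local Open Scope ring_scope.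

From mathcomp Require Import ring lra.


Lemma tangent_ln (R : realType) (x y m : R) : 0 <= x -> 0 < y -> 0 < m ->
  x * ln (y / m) + x - y <= x * ln (x / m).
Proof.
move=> x0 y0 m0.
have [->|xn0] := eqVneq x 0; first by rewrite !mul0r add0r sub0r oppr_le0 ltW.
have xp : 0 < x by rewrite lt_neqAle eq_sym xn0.
rewrite !lnM ?posrE ?invr_gt0 // !lnV ?posrE //.
have h := expR_ge1Dx (ln (y / x)).
rewrite lnK ?posrE ?divr_gt0 // lnM ?posrE ?invr_gt0 // lnV ?posrE // in h.
have h2 : x * (1 + (ln y + - ln x)) <= x * (y / x) by rewrite ler_wpM2l // ltW.
rewrite [x * (y / x)]mulrC divfK // in h2.
nra.
Qed.

Arguments tangent_ln {R x y m}.

Definition gibbs (R : realType) (A : finType) (b : R) (m q : A -> R) (a : A) : R :=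
  m a * expR (q a / b) / \sum_(a' : A) m a' * expR (q a' / b).

Arguments gibbs {R A}.
Section Gibbs.
Variables (R : realType) (A : finType) (b : R) (m q : A -> R).
Hypothesis b0 : 0 < b.
Hypothesis mpos : forall a, 0 < m a.
Hypothesis msum : \sum_(a : A) m a = 1.

Let Z := \sum_(a : A) m a * expR (q a / b).

Lemma Z_gt0 : 0 < Z.
Proof.
case: (pickP (fun _ : A => true)) => [a0 _|h].
  rewrite /Z (bigD1 a0) //= ltr_pwDl ?mulr_gt0 ?expR_gt0 //.
  by apply: sumr_ge0 => a _; rewrite mulr_ge0 ?expR_ge0 // ltW.
by move: msum; rewrite big_pred0 // => /eqP; rewrite eq_sym oner_eq0.
Qed.

Lemma gibbs_gt0 a : 0 < gibbs b m q a.
Proof. by rewrite /gibbs divr_gt0 ?mulr_gt0 ?expR_gt0 ?Z_gt0. Qed.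

Lemma gibbs_sum : \sum_(a : A) gibbs b m q a = 1.
Proof. by rewrite /gibbs -mulr_suml divff // gt_eqF // Z_gt0. Qed.

Lemma ln_gibbs a : ln (gibbs b m q a / m a) = q a / b - ln Z.
Proof.
have Zp := Z_gt0; have mp := mpos a.
have -> : gibbs b m q a / m a = expR (q a / b) * Z^-1.
  rewrite /gibbs -/Z; field; apply/andP; split; exact: lt0r_neq0.
by rewrite lnM ?posrE ?expR_gt0 ?invr_gt0 // expRK lnV ?posrE.
Qed.

Lemma gibbs_eq :
  \sum_(a : A) gibbs b m q a * (q a - b * ln (gibbs b m q a / m a)) = b * ln Z.
Proof.
under eq_bigr => a _ do rewrite ln_gibbs.
have E : forall a, q a - b * (q a / b - ln Z) = b * ln Z.
  by move=> a; field; exact: lt0r_neq0.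
under eq_bigr => a _ do rewrite E.
by rewrite -mulr_suml gibbs_sum mul1r.
Qed.

Lemma gibbs_le (p : A -> R) : (forall a, 0 <= p a) -> \sum_(a : A) p a = 1 ->
  \sum_(a : A) p a * (q a - b * ln (p a / m a)) <= b * ln Z.
Proof.
move=> p0 psum.
have H : \sum_(a : A) (p a * (q a / b - ln Z) + p a - gibbs b m q a)
     <= \sum_(a : A) p a * ln (p a / m a).
  by apply: ler_sum => a _; rewrite -ln_gibbs; apply: tangent_ln; rewrite ?gibbs_gt0.
rewrite sumrB big_split /= psum gibbs_sum addrK in H.
move: H; under eq_bigr => a _ do rewrite mulrBr mulrA.
rewrite sumrB -!mulr_suml psum mul1r => H.
under eq_bigr => a _ do rewrite mulrBr mulrCA.
rewrite sumrB -mulr_sumr.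
set P := \sum_(a : A) p a * q a in H *.
set K := \sum_(a : A) p a * ln (p a / m a) in H *.
have : b * (P / b - ln Z) <= b * K by rewrite ler_wpM2l // ltW.
rewrite mulrBr mulrCA divff ?mulr1; last exact: lt0r_neq0.
lra.
Qed.

End Gibbs.



Section MDP2.
Variables (R : realType) (S A : finType)
  (T : S -> A -> S -> R) (p0 : S -> R) (gamma beta alpha : R)
  (mu : S -> A -> R) (dU : S * A -> R) (Psi : S * A -> R).

Local Notation rho sa := (dU sa * delta alpha Psi sa).

Definition wgt (s : S) : R :=
  (1 - gamma) * p0 s + gamma * \sum_(sa : S * A) rho sa * T sa.1 sa.2 s.

Lemma gen_dec (Q : S -> A -> R) (V : S -> R) :
  (1 - gamma) * \sum_(s : S) p0 s * V s
  - \sum_(sa : S * A) dU sa * (delta alpha Psi sa *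
        (Q sa.1 sa.2 - gamma * \sum_(s' : S) T sa.1 sa.2 s' * V s'))
  = \sum_(s : S) wgt s * V s - \sum_(sa : S * A) rho sa * Q sa.1 sa.2.
Proof.
have E1 : \sum_(s : S) wgt s * V s = (1 - gamma) * \sum_(s : S) p0 s * V s
   + gamma * \sum_(sa : S * A) rho sa * \sum_(s : S) T sa.1 sa.2 s * V s.
  rewrite /wgt.
  under eq_bigr => s _ do rewrite mulrDl -!mulrA mulr_suml.
  rewrite big_split /= -!mulr_sumr; congr (_ + _ * _).
  rewrite exchange_big /=; apply: eq_bigr => sa _.
  by rewrite mulr_sumr; apply: eq_bigr => s _; rewrite !mulrA.
rewrite E1.
have E2 : \sum_(sa : S * A) dU sa * (delta alpha Psi sa *
        (Q sa.1 sa.2 - gamma * \sum_(s' : S) T sa.1 sa.2 s' * V s'))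
  = \sum_(sa : S * A) rho sa * Q sa.1 sa.2 - gamma *
     \sum_(sa : S * A) rho sa * \sum_(s : S) T sa.1 sa.2 s * V s.
  by rewrite mulr_sumr -sumrB; apply: eq_bigr => sa _; ring.
rewrite E2; lra.
Qed.


Local Notation cst := ((1 - alpha) * \sum_(sa : S * A) dU sa * delta alpha Psi sa).
Local Notation Lt := (Lpi gamma beta alpha T p0 mu dU Psi).
Local Notation Lq := (L gamma beta alpha T p0 mu dU Psi).

Lemma Lpi_dec Q pi : Lt Q pi =
  \sum_(s : S) wgt s * VQpi beta mu Q pi s - \sum_(sa : S * A) rho sa * Q sa.1 sa.2 + cst.
Proof. by rewrite /Lpi /TQpi (gen_dec Q (VQpi beta mu Q pi)). Qed.

Lemma L_dec Q : Lq Q =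
  \sum_(s : S) wgt s * VQ beta mu Q s - \sum_(sa : S * A) rho sa * Q sa.1 sa.2.
Proof. by rewrite /L /TQ (gen_dec Q (VQ beta mu Q)). Qed.

Hypothesis hT : is_kernel T.
Hypothesis hp0 : is_dist p0.
Hypothesis g0 : 0 <= gamma.
Hypothesis g1 : gamma < 1.
Hypothesis b0 : 0 < beta.
Hypothesis hmu : is_policy mu.
Hypothesis mupos : forall s a, 0 < mu s a.
Hypothesis hdU : is_dist dU.

Lemma rho_ge0 sa : 0 <= rho sa.
Proof. by rewrite mulr_ge0 ?expR_ge0 //; case: hdU. Qed.

Lemma wgt_ge0 s : 0 <= wgt s.
Proof.
rewrite /wgt addr_ge0 // mulr_ge0 //; first by rewrite subr_ge0 ltW.
  by case: hp0.
apply: sumr_ge0 => sa _; rewrite mulr_ge0 ?rho_ge0 //.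
by case: (hT sa.1 sa.2).
Qed.


Lemma partA pi Q1 Q2 (t : R) :
  Lt (fun s a => t * Q1 s a + (1 - t) * Q2 s a) pi = t * Lt Q1 pi + (1 - t) * Lt Q2 pi.
Proof.
rewrite !Lpi_dec.
have h1 : \sum_(s : S) wgt s * VQpi beta mu (fun s a => t * Q1 s a + (1 - t) * Q2 s a) pi s
   = t * \sum_(s : S) wgt s * VQpi beta mu Q1 pi s + (1 - t) * \sum_(s : S) wgt s * VQpi beta mu Q2 pi s.
  rewrite !mulr_sumr -big_split /=; apply: eq_bigr => s _.
  have -> : VQpi beta mu (fun s a => t * Q1 s a + (1 - t) * Q2 s a) pi s =
     t * VQpi beta mu Q1 pi s + (1 - t) * VQpi beta mu Q2 pi s.
    by rewrite /VQpi !mulr_sumr -big_split /=; apply: eq_bigr => a _ /=; ring.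
  ring.
have h2 : \sum_(sa : S * A) rho sa * (t * Q1 sa.1 sa.2 + (1 - t) * Q2 sa.1 sa.2)
   = t * \sum_(sa : S * A) rho sa * Q1 sa.1 sa.2 + (1 - t) * \sum_(sa : S * A) rho sa * Q2 sa.1 sa.2.
  by rewrite !mulr_sumr -big_split /=; apply: eq_bigr => sa _; ring.
rewrite h1 h2; ring.
Qed.

Lemma conc_term (p1 p2 m t q b : R) : 0 <= p1 -> 0 <= p2 -> 0 < m -> 0 <= t <= 1 -> 0 <= b ->
  t * (p1 * (q - b * ln (p1 / m))) + (1 - t) * (p2 * (q - b * ln (p2 / m))) <=
  (t * p1 + (1 - t) * p2) * (q - b * ln ((t * p1 + (1 - t) * p2) / m)).
Proof.
move=> hp1 hp2 hm /andP[t0 t1] hb.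
set p := t * p1 + (1 - t) * p2.
have tp1 : 0 <= t * p1 by rewrite mulr_ge0.
have tp2 : 0 <= (1 - t) * p2 by rewrite mulr_ge0 // subr_ge0.
suff key : p * ln (p / m) <= t * p1 * ln (p1 / m) + (1 - t) * p2 * ln (p2 / m).
  have := ler_wpM2l hb key; rewrite /p; nra.
have [p0'|pn0] := eqVneq p 0.
  have e1 : t * p1 = 0 by move: p0'; rewrite /p; lra.
  have e2 : (1 - t) * p2 = 0 by move: p0'; rewrite /p; lra.
  by rewrite p0' e1 e2 !mul0r addr0.
have pp : 0 < p by rewrite lt_neqAle eq_sym pn0 /p addr_ge0.
have k1 := tangent_ln hp1 pp hm.
have k2 := tangent_ln hp2 pp hm.
have k1' := ler_wpM2l t0 k1.
have t1' : 0 <= 1 - t by rewrite subr_ge0.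
have k2' := ler_wpM2l t1' k2.
rewrite /p in k1' k2' *; nra.
Qed.


Lemma partB Q pi1 pi2 (t : R) : is_policy pi1 -> is_policy pi2 -> 0 <= t <= 1 ->
  t * Lt Q pi1 + (1 - t) * Lt Q pi2 <= Lt Q (fun s a => t * pi1 s a + (1 - t) * pi2 s a).
Proof.
move=> h1 h2 ht.
rewrite !Lpi_dec.
have H : t * \sum_(s : S) wgt s * VQpi beta mu Q pi1 s + (1 - t) * \sum_(s : S) wgt s * VQpi beta mu Q pi2 s
  <= \sum_(s : S) wgt s * VQpi beta mu Q (fun s a => t * pi1 s a + (1 - t) * pi2 s a) s.
  rewrite !mulr_sumr -big_split /=; apply: ler_sum => s _.
  rewrite mulrCA [X in _ + X]mulrCA -mulrDr ler_wpM2l ?wgt_ge0 //.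
  rewrite /VQpi !mulr_sumr -big_split /=; apply: ler_sum => a _ /=.
  apply: conc_term => //; first by case: (h1 s).
    by case: (h2 s).
  exact: ltW.
lra.
Qed.

Lemma VQpi_le_VQ Q pi s : is_policy pi -> VQpi beta mu Q pi s <= VQ beta mu Q s.
Proof.
move=> hpi; rewrite /VQpi /VQ.
apply: gibbs_le => //; [by case: (hmu s)|by case: (hpi s)|by case: (hpi s)].
Qed.

Definition gpol (Q : S -> A -> R) (s : S) (a : A) : R := gibbs beta (mu s) (Q s) a.

Lemma gpol_policy Q : is_policy (gpol Q).
Proof.
move=> s; split; first by move=> a; apply/ltW/gibbs_gt0 => //; case: (hmu s).
by apply: gibbs_sum => //; case: (hmu s).
Qed.

Lemma VQpi_gpol Q s : VQpi beta mu Q (gpol Q) s = VQ beta mu Q s.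
Proof. by rewrite /VQpi /VQ /gpol gibbs_eq //; case: (hmu s). Qed.

Lemma partC Q : (exists2 pi, is_policy pi & Lt Q pi = Lq Q + cst) /\
             (forall pi, is_policy pi -> Lt Q pi <= Lq Q + cst).
Proof.
split.
  exists (gpol Q); first exact: gpol_policy.
  rewrite Lpi_dec L_dec; congr (_ - _ + _); apply: eq_bigr => s _.
  by rewrite VQpi_gpol.
move=> pi hpi; rewrite Lpi_dec L_dec lerD2r lerD2r.
by apply: ler_sum => s _; rewrite ler_wpM2l ?wgt_ge0 ?VQpi_le_VQ.
Qed.

Lemma partD Q1 Q2 (t : R) : 0 <= t <= 1 ->
  Lq (fun s a => t * Q1 s a + (1 - t) * Q2 s a) <= t * Lq Q1 + (1 - t) * Lq Q2.
Proof.
move=> /andP[t0 t1].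
have t1' : 0 <= 1 - t by rewrite subr_ge0.
set Qm := (fun s a => t * Q1 s a + (1 - t) * Q2 s a).
rewrite !L_dec.
have H : \sum_(s : S) wgt s * VQ beta mu Qm s <=
   t * \sum_(s : S) wgt s * VQ beta mu Q1 s + (1 - t) * \sum_(s : S) wgt s * VQ beta mu Q2 s.
  rewrite !mulr_sumr -big_split /=; apply: ler_sum => s _.
  rewrite [t * _]mulrCA [(1 - t) * _]mulrCA -mulrDr ler_wpM2l ?wgt_ge0 //.
  rewrite -VQpi_gpol.
  have -> : VQpi beta mu Qm (gpol Qm) s =
     t * VQpi beta mu Q1 (gpol Qm) s + (1 - t) * VQpi beta mu Q2 (gpol Qm) s.
    by rewrite /VQpi !mulr_sumr -big_split /=; apply: eq_bigr => a _ /=; rewrite /Qm; ring.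
  by apply: lerD; apply: ler_wpM2l => //; apply: VQpi_le_VQ; apply: gpol_policy.
have h2 : \sum_(sa : S * A) rho sa * Qm sa.1 sa.2
   = t * \sum_(sa : S * A) rho sa * Q1 sa.1 sa.2 + (1 - t) * \sum_(sa : S * A) rho sa * Q2 sa.1 sa.2.
  by rewrite !mulr_sumr -big_split /=; apply: eq_bigr => sa _; rewrite /Qm; ring.
rewrite h2; lra.
Qed.


Lemma sum_pair (F : S * A -> R) :
  \sum_(sa : S * A) F sa = \sum_(s : S) \sum_(a : A) F (s, a).
Proof. by rewrite pair_bigA; apply: eq_bigr => -[s a]. Qed.

Lemma VQ_const (f : S -> R) s : VQ beta mu (fun s a => f s) s = f s.
Proof.
rewrite /VQ -mulr_suml; have [_ ->] := hmu s; rewrite mul1r expRK.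
by field; exact: lt0r_neq0.
Qed.

Lemma infeas_neg s0 k :
  Lq (fun s a => if s == s0 then k else 0) = k * (wgt s0 - \sum_(a : A) rho (s0, a)).
Proof.
rewrite L_dec.
under eq_bigr => s _ do rewrite (VQ_const (fun s => if s == s0 then k else 0)).
rewrite sum_pair -sumrB (bigD1 s0) //= eqxx.
rewrite [X in _ + X]big1 ?addr0; first by rewrite -mulr_suml; ring.
move=> s /negbTE hs; rewrite hs mulr0 big1 ?subr0 // => a _.
by rewrite mulr0.
Qed.

Definition pstar (s : S) (a : A) : R :=
  if wgt s == 0 then mu s a else rho (s, a) / wgt s.

Section Feas.
Hypothesis feas : forall s, \sum_(a : A) rho (s, a) = wgt s.

Lemma pstar_key s a : wgt s * pstar s a = rho (s, a).
Proof.
rewrite /pstar; case: eqP => [w0|/eqP wn0].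
  rewrite w0 mul0r; apply/esym.
  apply: (psumr_eq0P (P := predT) (F := fun a => rho (s, a))) => //.
    by move=> b _; exact: rho_ge0.
  by rewrite feas.
by rewrite mulrC divfK.
Qed.

Lemma pstar_policy : is_policy pstar.
Proof.
move=> s; rewrite /pstar; case: eqP => [w0|/eqP wn0].
  exact: hmu.
split; first by move=> a; rewrite divr_ge0 ?rho_ge0 ?wgt_ge0.
by rewrite -mulr_suml feas divff.
Qed.

Lemma Lt_pstar Q : Lt Q pstar =
  cst - beta * \sum_(sa : S * A) rho sa * ln (pstar sa.1 sa.2 / mu sa.1 sa.2).
Proof.
rewrite Lpi_dec.
have E : \sum_(s : S) wgt s * VQpi beta mu Q pstar s =
   \sum_(s : S) \sum_(a : A) rho (s, a) * (Q s a - beta * ln (pstar s a / mu s a)).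
  apply: eq_bigr => s _; rewrite /VQpi mulr_sumr; apply: eq_bigr => a _.
  by rewrite mulrA pstar_key.
rewrite E !sum_pair /=.
have E2 : \sum_(s : S) \sum_(a : A) rho (s, a) * (Q s a - beta * ln (pstar s a / mu s a))
  = \sum_(s : S) \sum_(a : A) rho (s, a) * Q s a
    - beta * \sum_(s : S) \sum_(a : A) rho (s, a) * ln (pstar s a / mu s a).
  rewrite mulr_sumr -sumrB; apply: eq_bigr => s _.
  rewrite mulr_sumr -sumrB; apply: eq_bigr => a _; ring.
rewrite E2; lra.
Qed.

Definition Qth (th : R) (s : S) (a : A) : R := beta * ln (pstar s a / mu s a + th).

Lemma Qth_bound th : 0 < th ->
  Lq (Qth th) <= beta * th * \sum_(s : S) wgt s
     - beta * \sum_(sa : S * A) rho sa * ln (pstar sa.1 sa.2 / mu sa.1 sa.2).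
Proof.
move=> th0.
have ps0 s a : 0 <= pstar s a by case: (pstar_policy s) => h _; exact: h.
have xpos s a : 0 < pstar s a / mu s a + th
  by rewrite ltr_wpDl // divr_ge0 // ltW.
have V s : VQ beta mu (Qth th) s = beta * ln (1 + th).
  rewrite /VQ /Qth.
  have -> : \sum_(a : A) mu s a * expR (beta * ln (pstar s a / mu s a + th) / beta)
     = \sum_(a : A) (pstar s a + th * mu s a).
    apply: eq_bigr => a _.
    have -> : beta * ln (pstar s a / mu s a + th) / beta = ln (pstar s a / mu s a + th).
      by field; exact: lt0r_neq0.
    rewrite lnK ?posrE //; field; exact: lt0r_neq0 (mupos s a).
  rewrite big_split /= -mulr_sumr.
  by case: (pstar_policy s) => _ ->; case: (hmu s) => _ ->; rewrite mulr1.
have lnth : ln (1 + th) <= th.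
  have h1 : 0 < 1 + th by rewrite addr_gt0.
  rewrite -{2}(expRK th) ler_ln ?posrE ?expR_gt0 //; exact: expR_ge1Dx.
rewrite L_dec.
under eq_bigr => s _ do rewrite V.
have H1 : \sum_(s : S) wgt s * (beta * ln (1 + th)) <= beta * th * \sum_(s : S) wgt s.
  rewrite mulr_sumr; apply: ler_sum => s _.
  rewrite mulrC; apply: ler_wpM2r; first exact: wgt_ge0.
  by apply: ler_wpM2l => //; exact: ltW.
have H2 : beta * \sum_(sa : S * A) rho sa * ln (pstar sa.1 sa.2 / mu sa.1 sa.2)
   <= \sum_(sa : S * A) rho sa * Qth th sa.1 sa.2.
  rewrite mulr_sumr; apply: ler_sum => -[s a] _ /=; rewrite /Qth.
  have [r0|rn0] := eqVneq (rho (s, a)) 0; first by rewrite r0 !mul0r mulr0.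
  have pp : 0 < pstar s a.
    rewrite lt_neqAle ps0 andbT; apply/eqP => h.
    by move: rn0; rewrite -pstar_key -h mulr0 eqxx.
  have hl : ln (pstar s a / mu s a) <= ln (pstar s a / mu s a + th).
    by rewrite ler_ln ?posrE ?divr_gt0 // lerDl ltW.
  have := ler_wpM2l (mulr_ge0 (rho_ge0 (s, a)) (ltW b0)) hl.
  move=> h; rewrite mulrCA; move: h; rewrite -mulrA; lra.
lra.
Qed.

End Feas.

Lemma partE :
  ereal_sup [set ereal_inf (range (fun Q => (Lt Q pi)%:E)) | pi in is_policy]
  = ereal_inf (range (fun Q => ereal_sup [set (Lt Q pi)%:E | pi in is_policy])).
Proof.
have ubQ Q : (ereal_sup [set (Lt Q pi)%:E | pi in is_policy] <= (Lq Q + cst)%:E)%E.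
  by apply/ereal_supP => _ [pi hpi <-]; rewrite lee_fin; exact: (partC Q).2.
apply/eqP; rewrite eq_le; apply/andP; split.
  apply/ereal_supP => _ [pi hpi <-]; apply/ereal_infP => _ [Q _ <-].
  apply: (@le_trans _ _ (Lt Q pi)%:E).
    by apply: ge_ereal_inf; exists (Lt Q pi)%:E => //; exists Q.
  by apply: ereal_sup_ge; exists (Lt Q pi)%:E => //; exists pi.
have [feas|infeas] := pselect (forall s, \sum_(a : A) rho (s, a) = wgt s).
  set Kc := cst - beta * \sum_(sa : S * A) rho sa * ln (pstar sa.1 sa.2 / mu sa.1 sa.2).
  apply: (@le_trans _ _ Kc%:E).
    apply/lee_addgt0Pr => e e0.
    set W := \sum_(s : S) wgt s.
    have W0 : 0 <= W by apply: sumr_ge0 => s _; exact: wgt_ge0.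
    set th := e / (beta * (W + 1)).
    have th0 : 0 < th by rewrite divr_gt0 // mulr_gt0 // ltr_wpDl.
    apply: ge_ereal_inf.
    exists (ereal_sup [set (Lt (Qth th) pi)%:E | pi in is_policy]); first by exists (Qth th).
    apply: (le_trans (ubQ _)); rewrite -EFinD lee_fin.
    have hb := @Qth_bound feas th th0.
    have : beta * th * W <= e.
      have W1 : 0 < W + 1 by rewrite ltr_wpDl.
      have -> : beta * th * W = e * (W / (W + 1)).
        rewrite /th; field; apply/andP; split; exact: lt0r_neq0.
      rewrite -[X in _ <= X]mulr1 ler_wpM2l ?ltW //.
      by rewrite ltr_pdivrMr // mul1r ltrDl.
    move=> hW; move: hb; rewrite /Kc -/W => hb. set Y := (beta * \sum_(sa : S * A) _) in hb *. set Z := Lq _ in hb *. set C := ((1 - alpha) * _) in hb *. lra.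
  apply: ereal_sup_ge.
  exists (ereal_inf (range (fun Q => (Lt Q (pstar))%:E))); first by exists pstar => //; exact: pstar_policy.
  by apply/ereal_infP => _ [Q _ <-]; rewrite Lt_pstar.
have [s0 hs0] : exists s0, ~ (\sum_(a : A) rho (s0, a) = wgt s0) by apply/existsNP.
have d0 : wgt s0 - \sum_(a : A) rho (s0, a) != 0.
  by rewrite subr_eq0; apply/eqP => h; apply: hs0; rewrite h.
suff -> : ereal_inf (range (fun Q => ereal_sup [set (Lt Q pi)%:E | pi in is_policy])) = -oo%E
  by rewrite leNye.
apply: eq_ninfty => r.
set k := (r - cst) / (wgt s0 - \sum_(a : A) rho (s0, a)).
apply: ge_ereal_inf.
exists (ereal_sup [set (Lt (fun s a => if s == s0 then k else 0) pi)%:E | pi in is_policy]).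
  by exists (fun s a => if s == s0 then k else 0).
apply: (le_trans (ubQ _)); rewrite lee_fin infeas_neg /k.
by rewrite divfK // subrK.
Qed.

End MDP2.

Theorem proposition4p4 (R : realType) (S A : finType)
  (T : S -> A -> S -> R) (p0 : S -> R) (gamma beta alpha : R)
  (mu : S -> A -> R) (dU : S * A -> R) (Psi : S * A -> R) :
  is_kernel T -> is_dist p0 -> 0 <= gamma -> gamma < 1 ->
  0 < beta -> 0 <= alpha -> alpha < 1 ->
  is_policy mu -> (forall s a, 0 < mu s a) ->
  is_dist dU ->
  let Lt := Lpi gamma beta alpha T p0 mu dU Psi in
  let Lq := L gamma beta alpha T p0 mu dU Psi in
  let c := (1 - alpha) * \sum_(sa : S * A) dU sa * delta alpha Psi sa in
  let mix := fun (t : R) (f g : S -> A -> R) =>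
               (fun s a => t * f s a + (1 - t) * g s a) in
  (* (i) affine (linear) in Q *)
  (forall pi Q1 Q2 (t : R), is_policy pi ->
     Lt (mix t Q1 Q2) pi = t * Lt Q1 pi + (1 - t) * Lt Q2 pi) /\
  (* (i) concave in pi *)
  (forall Q pi1 pi2 (t : R), is_policy pi1 -> is_policy pi2 ->
     0 <= t <= 1 ->
     t * Lt Q pi1 + (1 - t) * Lt Q pi2 <= Lt Q (mix t pi1 pi2)) /\
  (* (i) minimax equality (sup/inf in extended reals) *)
  (ereal_sup [set ereal_inf (range (fun Q => (Lt Q pi)%:E)) | pi in is_policy]
   = ereal_inf (range (fun Q =>
       ereal_sup [set (Lt Q pi)%:E | pi in is_policy]))) /\
  (* (ii) max over pi of Lt Q pi equals Lq Q + c, attained *)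
  (forall Q, (exists2 pi, is_policy pi & Lt Q pi = Lq Q + c) /\
             (forall pi, is_policy pi -> Lt Q pi <= Lq Q + c)) /\
  (* (ii) Lq convex in Q *)
  (forall Q1 Q2 (t : R), 0 <= t <= 1 ->
     Lq (mix t Q1 Q2) <= t * Lq Q1 + (1 - t) * Lq Q2).
Proof.
move=> hT hp0 g0 g1 b0 a0 a1 hmu mupos hdU Lt Lq c mix.
split; first by move=> pi Q1 Q2 t _; apply: partA.
split; first by move=> Q pi1 pi2 t h1 h2 ht; apply: partB.
split; first by apply: partE.
split; first by move=> Q; apply: partC.
by move=> Q1 Q2 t ht; apply: partD.
Qed.
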